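(* Let $d\ge1$, $D=2^d$, $b$ an odd integer and $w=(b-1)/2$. Identify $a\in\{0,\dots,D-1\}$ with its bit string $(a_{d-1},\dots,a_0)$, $a=\sum_{i=0}^{d-1}a_i2^i$. For $l=1,\dots,d-1$ define the map $G_l$ on $\{0,\dots,D-1\}$ as follows: if bit $a_{d-1-l}$ of its argument $a$ equals $1$, replace the integer $t=\sum_{i=0}^{l-1}a_{d-l+i}2^i$ formed by the top $l$ bits $(a_{d-1},\dots,a_{d-l})$ by $t+w\bmod 2^l$, leaving all other bits unchanged; if $a_{d-1-l}=0$, $G_l(a)=a$. Then for every $a\in\{0,\dots,D-1\}$, $$G_{d-1}\circ G_{d-2}\circ\cdots\circ G_1(a)=ab\bmod D .$$ Consequently the modular multiplication gate $|a\rangle\mapsto|ab\bmod D\rangle$ on $d$ qubits equals the product of the corresponding controlled modular-summation gates $\mathcal{SUM}(w\bmod 2^{d-1})^{h_0}\cdots\mathcal{SUM}(w\bmod 2^{2})^{h_{d-3}}\mathcal{SUM}(w\bmod 2^{1})^{h_{d-2}}$ (rightmost applied first) and requires no auxiliary qubits.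
   Context: $\mathcal{SUM}(w\bmod 2^l)^{h_k}$ denotes the gate that, controlled by qubit $h_k$ (the qubit holding bit $a_k$), adds $w$ modulo $2^l$ to the register formed by the top $l$ qubits $(h_{d-1},\dots,h_{d-l})$, interpreted as an $l$-bit integer with $h_{d-l}$ least significant. *)

(* Defs.v *)
From mathcomp Require Import all_boot all_order all_algebra.
Set Implicit Arguments. Unset Strict Implicit. Unset Printing Implicit Defensive.
Import GRing.Theory Num.Theory.

Definition bit (i a : nat) : bool := odd (a %/ 2 ^ i).

(* On d qubits (a < 2^d), the integer formed by the top l bits
   (a_{d-1},...,a_{d-l}) with a_{d-l} least significant. *)
Definition topbits (d l a : nat) : nat := a %/ 2 ^ (d - l).
Definition lowbits (d l a : nat) : nat := a %% 2 ^ (d - l).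

(* (t + w) mod 2^l, computed in the integers (w may be negative). *)
Definition addmod (l t : nat) (w : int) : nat :=
  `| ((t%:Z + w) %% (2 ^ l)%:Z)%Z |%N.

Definition SUMgate (d l k : nat) (w : int) (a : nat) : nat :=
  if bit k a then addmod l (topbits d l a) w * 2 ^ (d - l) + lowbits d l a
  else a.

Definition G (d : nat) (w : int) (l : nat) (a : nat) : nat :=
  SUMgate d l (d - 1 - l) w a.

Definition Gcomp (d : nat) (w : int) (a : nat) : nat :=
  foldl (fun x l => G d w l x) a (iota 1 (d - 1)).

(* Main.v *)
Require Import Defs.
From mathcomp Require Import all_boot all_order all_algebra.
From mathcomp Require Import zify ring lra.
Import GRing.Theory Num.Theory.

Lemma bit_modpow k m x : (k < m)%N -> bit k x = bit k (x %% 2 ^ m).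
Proof.
move=> km; rewrite /bit {1}(divn_eq x (2 ^ m)).
have -> : (2 ^ m = 2 ^ (m - k) * 2 ^ k)%N by rewrite -expnD subnK // ltnW.
rewrite mulnA divnMDl ?expn_gt0 // oddD oddM oddX /=.
by rewrite subn_eq0 leqNgt km andbF.
Qed.

Lemma mod_step a m : (a %% 2 ^ m.+1 = a %% 2 ^ m + bit m a * 2 ^ m)%N.
Proof.
rewrite /bit.
set q := a %/ 2 ^ m.
have h1 : a = (q %/ 2) * 2 ^ m.+1 + (odd q * 2 ^ m + a %% 2 ^ m).
  rewrite {1}(divn_eq a (2 ^ m)) -/q {1}(divn_eq q 2) modn2 expnSr.
  by rewrite mulnDl addnA [2 ^ m * 2]mulnC mulnA.
rewrite {1}h1 modnMDl modn_small addnC //.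
have r := ltn_mod a (2 ^ m); rewrite expn_gt0 /= in r.
rewrite expnSr muln2 -addnn.
case: (odd q); rewrite ?mul1n ?mul0n ?addn0.
  by rewrite ltn_add2r.
by apply: (leq_trans r); rewrite leq_addr.
Qed.

Local Open Scope ring_scope.

Lemma gate (d l k : nat) (w : int) (x : nat) : (l <= d)%N -> (x < 2 ^ d)%N ->
 [/\ (SUMgate d l k w x < 2 ^ d)%N,
     (SUMgate d l k w x %% 2 ^ (d-l) = x %% 2 ^ (d-l))%N &
     ((SUMgate d l k w x)%:Z = ((x%:Z + (bit k x)%:Z * w * (2 ^ (d-l))%N%:Z) %% (2 ^ d)%N%:Z)%Z)].
Proof.
move=> ld xd; rewrite /SUMgate.
have eD : (2 ^ d = 2 ^ l * 2 ^ (d - l))%N by rewrite -expnD subnKC.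
have Pp : (0 < 2 ^ (d - l))%N by rewrite expn_gt0.
have Qp : (0 < 2 ^ l)%N by rewrite expn_gt0.
case: (bit k x) => /=; last first.
  have -> : (0%N%:Z * w * (2 ^ (d-l))%N%:Z) = 0 by rewrite !mul0r.
  by rewrite addr0 modz_small //; split => //; apply/andP; split => //; rewrite ltz_nat.
set t := topbits d l x; set lo := lowbits d l x.
have hx : x = (t * 2 ^ (d - l) + lo)%N by rewrite /t /lo /topbits /lowbits -divn_eq.
have lolt : (lo < 2 ^ (d - l))%N by rewrite /lo /lowbits ltn_mod.
set s : int := ((t%:Z + w) %% (2 ^ l)%N%:Z)%Z.
have s0 : 0 <= s by apply: modz_ge0; lia.
have s1 : s < (2 ^ l)%N%:Z by apply: ltz_pmod; lia.
have hs : (addmod l t w)%:Z = s by rewrite /addmod gez0_abs.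
have hq := divz_eq (t%:Z + w) (2 ^ l)%N%:Z.
set q := ((t%:Z + w) %/ (2 ^ l)%N%:Z)%Z in hq.
have key : ((addmod l t w * 2 ^ (d - l) + lo)%N)%:Z = s * (2 ^ (d - l))%N%:Z + lo%:Z.
  by rewrite PoszD PoszM hs.
have B : s * (2 ^ (d - l))%N%:Z + lo%:Z < (2 ^ d)%N%:Z.
  rewrite eD PoszM; nia.
have s0' : 0 <= s * (2 ^ (d - l))%N%:Z + lo%:Z by nia.
split.
- by rewrite -ltz_nat key.
- by rewrite modnMDl /lo /lowbits modn_mod.
rewrite key.
have -> : x%:Z + (true : nat)%:Z * w * (2 ^ (d - l))%N%:Z
   = q * (2 ^ d)%N%:Z + (s * (2 ^ (d - l))%N%:Z + lo%:Z).
  rewrite eD hx PoszM PoszD PoszM /=.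
  transitivity ((t%:Z + w) * (2 ^ (d - l))%N%:Z + lo%:Z); first ring.
  rewrite hq -/s; ring.
by rewrite modzMDl modz_small // s0' B.
Qed.

Lemma inv (d : nat) (w : int) (a : nat) : (1 <= d)%N -> (a < 2 ^ d)%N -> forall n, (n <= d - 1)%N ->
 [/\ (foldl (fun x l => G d w l x) a (iota 1 n) < 2 ^ d)%N,
     (foldl (fun x l => G d w l x) a (iota 1 n) %% 2 ^ (d - n) = a %% 2 ^ (d - n))%N &
     (foldl (fun x l => G d w l x) a (iota 1 n))%:Z =
       ((a%:Z + 2 * w * ((a %% 2 ^ (d - 1))%N%:Z - (a %% 2 ^ (d - 1 - n))%N%:Z)) %% (2 ^ d)%N%:Z)%Z].
Proof.
move=> d1 ad; elim=> [|n IH] hn.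
  rewrite /= !subn0 subrr mulr0 addr0 modz_small; first by split.
  by apply/andP; split => //; rewrite ltz_nat.
have [r1 r2 r3] := IH (ltnW hn).
rewrite (_ : iota 1 n.+1 = iota 1 n ++ [:: n.+1]); last by have h := iotaD 1 n 1; rewrite addn1 in h; rewrite h add1n.
rewrite foldl_cat /=.
set r := foldl _ a (iota 1 n) in r1 r2 r3 *.
rewrite /G.
set k := (d - 1 - n.+1)%N.
have hl : (n.+1 <= d)%N by clear -hn d1; lia.
have [g1 g2 g3] := @gate d n.+1 k w r hl r1.
have hb : bit k r = bit k a.
  have hk : (k < d - n)%N by rewrite /k; clear -hn d1; lia.
  by rewrite (@bit_modpow k (d - n) r hk) r2 -(@bit_modpow k (d - n) a hk).
have e1 : (d - n.+1 = k.+1)%N by rewrite /k; clear -hn d1; lia.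
have e2 : (d - 1 - n = k.+1)%N by rewrite /k; clear -hn d1; lia.
split => //.
- rewrite g2 e1.
  have dv : (2 ^ k.+1 %| 2 ^ (d - n))%N by rewrite dvdn_exp2l //; clear -hn d1; lia.
  by rewrite -(modn_dvdm r dv) r2 (modn_dvdm a dv).
rewrite g3 hb r3 modzDml e1 e2 mod_step PoszD !PoszM expnS PoszM.
congr (_ %% _)%Z; ring.
Qed.

Theorem mainTheorem8 (d : nat) (b : int) :
  (1 <= d)%N -> (b %% 2)%Z = 1 ->
  let w : int := ((b - 1) %/ 2)%Z in
  forall a : nat, (a < 2 ^ d)%N ->
    (Gcomp d w a)%:Z = ((a%:Z * b) %% (2 ^ d)%:Z)%Z.
Proof.
move=> d1 hb w a ad.
have [_ _ h] := @inv d w a d1 ad (d - 1) (leqnn (d - 1)).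
rewrite /Gcomp h subnn expn0 modn1.
have hw : b = 1 + 2 * w.
  rewrite /w; have := divz_eq b 2; rewrite hb => e.
  have -> : b - 1 = (b %/ 2)%Z * 2 by rewrite {1}e; ring.
  rewrite mulzK //; rewrite {1}e; ring.
have ea := divn_eq a (2 ^ (d - 1)).
have eD : (2 ^ d = 2 ^ (d - 1) * 2)%N by rewrite -expnSr subn1 prednK.
have -> : a%:Z * b = (w * (a %/ 2 ^ (d - 1))%N%:Z) * (2 ^ d)%N%:Z
   + (a%:Z + 2 * w * ((a %% 2 ^ (d - 1))%N%:Z - 0%N%:Z)).
  rewrite hw eD {1 3}ea PoszD !PoszM /=; ring.
by rewrite modzMDl.
Qed.
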